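(* The cardinality of any SudoQ of size $4\times4$ belongs to the set $\{4,6,8,16\}$.
   Context: For $N\ge1$, a SudoQ (quantum Sudoku) of size $N^2\times N^2$ is an $N^2\times N^2$ array of unit vectors in $\mathbb{C}^{N^2}$ such that the entries of each row, of each column, and of each of the $N^2$ disjoint $N\times N$ blocks (obtained by partitioning rows and columns into $N$ consecutive groups of $N$) form an orthonormal basis of $\mathbb{C}^{N^2}$. Its cardinality is the number of distinct entries, vectors differing only by a global phase being considered equal. Here $N=2$. *)

(* Defs.v *)
From HB Require Import structures.
From mathcomp Require Import all_boot all_order all_algebra.
From mathcomp Require Import reals.
From mathcomp Require Import complex.
Set Implicit Arguments. Unset Strict Implicit. Unset Printing Implicit Defensive.
Import Order.TTheory GRing.Theory Num.Theory.
Local Open Scope ring_scope.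
Local Open Scope complex_scope.

Definition hdot (R : rcfType) (n : nat) (u v : 'rV[R[i]]_n) : R[i] :=
  \sum_(k < n) ((u 0 k)^* * v 0 k).

Definition is_onb (R : rcfType) (n : nat) (I : finType) (f : I -> 'rV[R[i]]_n) : Prop :=
  [/\ forall a, hdot (f a) (f a) = 1,
      forall a b, a != b -> hdot (f a) (f b) = 0
    & row_full (\matrix_(k < #|I|) f (enum_val k))].

(* Position of the p-th row (or column) inside the a-th band of 2 rows/cols. *)
Definition blk (a p : 'I_2) : 'I_4 := inord (2 * a + p)%N.

Definition sudoQ4 (R : rcfType) (S : 'I_4 -> 'I_4 -> 'rV[R[i]]_4) : Prop :=
  [/\ forall r : 'I_4, is_onb (fun c : 'I_4 => S r c),
      forall c : 'I_4, is_onb (fun r : 'I_4 => S r c)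
    & forall a b : 'I_2,
        is_onb (fun pq : 'I_2 * 'I_2 => S (blk a pq.1) (blk b pq.2))].

Definition phase_eq (R : rcfType) (n : nat) (u v : 'rV[R[i]]_n) : Prop :=
  exists z : R[i], `|z| = 1 /\ u = z *: v.

(* The
   cardinality of S is then #|Rep|. *)
Definition phase_reps (R : rcfType) (S : 'I_4 -> 'I_4 -> 'rV[R[i]]_4)
    (Rep : {set 'I_4 * 'I_4}) : Prop :=
  (forall c : 'I_4 * 'I_4, exists2 d, d \in Rep & phase_eq (S c.1 c.2) (S d.1 d.2)) /\
  (forall d e, d \in Rep -> e \in Rep -> d != e -> ~ phase_eq (S d.1 d.2) (S e.1 e.2)).

(* Main.v *)
Require Import Defs.
From HB Require Import structures.
From mathcomp Require Import all_boot all_order all_algebra.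
From mathcomp Require Import reals.
From mathcomp Require Import complex.
From mathcomp Require Import boolp.
From mathcomp Require Import ring.
Set Implicit Arguments. Unset Strict Implicit. Unset Printing Implicit Defensive.
Import Order.TTheory GRing.Theory Num.Theory.
Local Open Scope ring_scope.


Section Basics.
Context (R : rcfType).
Local Notation C := R[i].
Local Notation vec := 'rV[C]_4.

Lemma hdotDr (u v w : vec) : hdot u (v + w) = hdot u v + hdot u w.
Proof. by rewrite /hdot -big_split /=; apply: eq_bigr => k _; rewrite mxE mulrDr. Qed.
Lemma hdotZr (a : C) (u v : vec) : hdot u (a *: v) = a * hdot u v.
Proof. by rewrite /hdot mulr_sumr; apply: eq_bigr => k _; rewrite mxE mulrCA. Qed.
Lemma hdotC (u v : vec) : hdot v u = (hdot u v)^*.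
Proof. by rewrite /hdot rmorph_sum; apply: eq_bigr => k _; rewrite rmorphM /= conjCK mulrC. Qed.
Lemma hdotDl (u v w : vec) : hdot (u + v) w = hdot u w + hdot v w.
Proof. by rewrite hdotC hdotDr rmorphD /= -!hdotC. Qed.
Lemma hdotZl (a : C) (u v : vec) : hdot (a *: u) v = a^* * hdot u v.
Proof. by rewrite hdotC hdotZr rmorphM /= -hdotC. Qed.
Lemma hdot0r (u : vec) : hdot u 0 = 0.
Proof. by rewrite /hdot big1 // => k _; rewrite mxE mulr0. Qed.

Lemma complete_gen (f : 'I_4 -> vec) :
  (forall i j, hdot (f i) (f j) = (i == j)%:R) ->
  forall v, v = \sum_i hdot (f i) v *: f i.
Proof.
move=> on v.
pose M : 'M[C]_4 := \matrix_(i, j) f i 0 j.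
pose Mh : 'M[C]_4 := \matrix_(i, j) (M j i)^*.
have h1 : M *m Mh = 1%:M.
  apply/matrixP => i j; rewrite !mxE eq_sym -on /hdot.
  by apply: eq_bigr => k _; rewrite !mxE mulrC.
have h2 := mulmx1C h1.
have e k l : \sum_i (M i k)^* * M i l = (k == l)%:R.
  have := congr1 (fun A : 'M[C]_4 => A k l) h2; rewrite !mxE => <-.
  by apply: eq_bigr => i _; rewrite !mxE.
apply/rowP => l.
rewrite summxE.
have -> : \sum_i (hdot (f i) v *: f i) 0 l = \sum_k v 0 k * \sum_i ((M i k)^* * M i l).
  symmetry; under eq_bigr => k _ do rewrite mulr_sumr.
  rewrite exchange_big /=; apply: eq_bigr => i _; rewrite !mxE /hdot mulr_suml.
  by apply: eq_bigr => k _; rewrite !mxE mulrA [v 0 k * _]mulrC.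
under eq_bigr => k _ do rewrite e.
rewrite (bigD1 l) //= eqxx mulr1 big1 ?addr0 // => k kl.
by rewrite (negbTE kl) mulr0.
Qed.
End Basics.

Definition o0 : 'I_4 := @Ordinal 4 0 isT.
Definition o1 : 'I_4 := @Ordinal 4 1 isT.
Definition o2 : 'I_4 := @Ordinal 4 2 isT.
Definition o3 : 'I_4 := @Ordinal 4 3 isT.

Lemma ord4P (i : 'I_4) : [\/ i = o0, i = o1, i = o2 | i = o3].
Proof.
case: i => [[|[|[|[|n]]]] Hn].
- by apply: Or41; apply: val_inj.
- by apply: Or42; apply: val_inj.
- by apply: Or43; apply: val_inj.
- by apply: Or44; apply: val_inj.
- by [].
Qed.

Definition adj (i j k l : 'I_4) : bool :=
  ((i, j) != (k, l)) &&
  [|| i == k, j == l | (i %/ 2 == k %/ 2)%N && (j %/ 2 == l %/ 2)%N].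

Lemma adj_test : adj o0 o2 o1 o3 && ~~ adj o0 o2 o2 o0.
Proof. by []. Qed.

Lemma blkE (i : 'I_4) : blk (inord (i %/ 2)) (inord (i %% 2)) = i.
Proof.
have h1 : (i %/ 2 < 2)%N by case: i => [[|[|[|[|]]]]].
have h2 : (i %% 2 < 2)%N by rewrite ltn_mod.
apply: val_inj; rewrite /blk /= (@inordK 1 _ h1) (@inordK 1 _ h2) mulnC -divn_eq.
by rewrite inordK.
Qed.

Lemma sudoQ_unit (R : rcfType) (S : 'I_4 -> 'I_4 -> 'rV[R[i]]_4) :
  sudoQ4 S -> forall i j, hdot (S i j) (S i j) = 1.
Proof. by case=> hr _ _ i j; case: (hr i). Qed.

Lemma sudoQ_orth (R : rcfType) (S : 'I_4 -> 'I_4 -> 'rV[R[i]]_4) :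
  sudoQ4 S -> forall i j k l, adj i j k l -> hdot (S i j) (S k l) = 0.
Proof.
case=> hr hc hb i j k l /andP[ne /or3P[/eqP ik|/eqP jl|/andP[/eqP ik /eqP jl]]].
- subst k; case: (hr i) => _ h _; apply: h.
  by apply: contra ne => /eqP ->.
- subst l; case: (hc j) => _ h _; apply: h.
  by apply: contra ne => /eqP ->.
- case: (hb (inord (i %/ 2)) (inord (j %/ 2))) => _ h _.
  have := h (inord (i %% 2), inord (j %% 2)) (inord (k %% 2), inord (l %% 2)).
  rewrite /= [blk _ (inord (i %% 2))]blkE [blk _ (inord (j %% 2))]blkE ik jl !blkE; apply.
  apply: contra ne => /eqP [] ei ej.
  have hi : i = k.
    apply: val_inj; rewrite /= (divn_eq i 2) (divn_eq k 2) ik.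
    by move: ei => /(congr1 val); rewrite /= !inordK ?ltn_mod // => ->.
  have hj : j = l.
    apply: val_inj; rewrite /= (divn_eq j 2) (divn_eq l 2) jl.
    by move: ej => /(congr1 val); rewrite /= !inordK ?ltn_mod // => ->.
  by rewrite hi hj.
Qed.

Section Phase.
Context (R : rcfType).
Local Notation C := R[i].
Local Notation vec := 'rV[C]_4.

Lemma peq_refl (u : vec) : phase_eq u u.
Proof. by exists 1; rewrite normr1 scale1r. Qed.

Lemma peq_sym (u v : vec) : phase_eq u v -> phase_eq v u.
Proof.
case=> z [nz ->]; exists z^-1; split; first by rewrite normfV nz invr1.
have z0 : z != 0 by apply/eqP => z0; move: nz; rewrite z0 normr0 => /eqP; rewrite eq_sym oner_eq0.
by rewrite scalerA mulVf // scale1r.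
Qed.

Lemma peq_trans (u v w : vec) : phase_eq u v -> phase_eq v w -> phase_eq u w.
Proof.
case=> z [nz ->] [y [ny ->]]; exists (z * y); split; first by rewrite normrM nz ny mulr1.
by rewrite scalerA.
Qed.

Lemma norm1_neq0 (z : C) : `|z| = 1 -> z != 0.
Proof. by move=> nz; apply/eqP => z0; move: nz; rewrite z0 normr0 => /eqP; rewrite eq_sym oner_eq0. Qed.

Lemma npeq_orth (u w : vec) : hdot w w = 1 -> hdot u w = 0 -> ~ phase_eq u w.
Proof.
move=> ww uw [z [nz ue]]; move: uw; rewrite ue hdotZl ww mulr1 => /eqP.
by rewrite conjC_eq0 (negbTE (norm1_neq0 nz)).
Qed.

Lemma npeq_zero (u w e : vec) : hdot e u = 0 -> hdot e w != 0 -> ~ phase_eq u w.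
Proof.
move=> eu ew [z [nz ue]]; move: eu; rewrite ue hdotZr => /eqP.
by rewrite mulf_eq0 (negbTE (norm1_neq0 nz)) (negbTE ew).
Qed.

Definition onb4 (a b c d : vec) :=
  [/\ hdot a a = 1, hdot b b = 1, hdot c c = 1, hdot d d = 1 &
   [/\ hdot a b = 0, hdot a c = 0, hdot a d = 0, hdot b c = 0 & [/\ hdot b d = 0 & hdot c d = 0]]].

Lemma complete4 (a b c d : vec) : onb4 a b c d ->
  forall v, v = hdot a v *: a + hdot b v *: b + hdot c v *: c + hdot d v *: d.
Proof.
move=> [ha hb hc hd [hab hac had hbc [hbd hcd]]] v.
pose f (i : 'I_4) := nth 0 [:: a; b; c; d] i.
have hf : forall i j, hdot (f i) (f j) = (i == j)%:R.
  have sy (x y : vec) : hdot x y = 0 -> hdot y x = 0 by move=> h; rewrite hdotC h conjC0.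
  have hba := sy _ _ hab; have hca := sy _ _ hac; have hda := sy _ _ had.
  have hcb := sy _ _ hbc; have hdb := sy _ _ hbd; have hdc := sy _ _ hcd.
  by move=> i j; case: (ord4P i) => ->; case: (ord4P j) => -> /=;
    rewrite /f /= ?ha ?hb ?hc ?hd ?hab ?hac ?had ?hbc ?hbd ?hcd ?hba ?hca ?hda ?hcb ?hdb ?hdc.
rewrite {1}(complete_gen hf v) !big_ord_recl big_ord0 addr0 /=.
by rewrite !addrA.
Qed.

Lemma onb_phase (a b c d v : vec) : onb4 a b c d -> hdot v v = 1 ->
  hdot a v = 0 -> hdot b v = 0 -> hdot c v = 0 -> phase_eq v d.
Proof.
move=> o vv av bv cv; have e := complete4 o v.
rewrite av bv cv !scale0r !add0r in e.
exists (hdot d v); split=> //.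
move: vv; rewrite {1 2}e hdotZl hdotZr.
case: o => _ _ _ -> _; rewrite mulr1 mulrC -normCK => /eqP.
by rewrite sqrp_eq1 ?normr_ge0 // => /eqP.
Qed.

Lemma onb_span (a b c d v : vec) : onb4 a b c d ->
  hdot c v = 0 -> hdot d v = 0 -> v = hdot a v *: a + hdot b v *: b.
Proof.
move=> o cv dv; have e := complete4 o v.
by rewrite cv dv !scale0r !addr0 in e.
Qed.

End Phase.

Definition cell := ('I_4 * 'I_4)%type.
Definition rk (c : cell) : nat :=
  (4 * (2 * (c.1 %/ 2) + c.2 %/ 2) + 2 * (c.1 %% 2) + c.2 %% 2)%N.

Lemma rk_inj : injective rk.
Proof.
move=> [a b] [c d]; case: (ord4P a) => ->; case: (ord4P b) => ->;
  case: (ord4P c) => ->; case: (ord4P d) => ->; by move/eqP.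
Qed.

Definition Fset (R : rcfType) (S : 'I_4 -> 'I_4 -> 'rV[R[i]]_4) : {set cell} :=
  [set c : cell | [forall d : cell, (rk d < rk c)%N ==> ~~ `[< phase_eq (S d.1 d.2) (S c.1 c.2) >]]].

Lemma card_reps (R : rcfType) (S : 'I_4 -> 'I_4 -> 'rV[R[i]]_4) (Rep : {set cell}) :
  phase_reps S Rep -> #|Rep| = #|Fset S|.
Proof.
case=> cov sep.
pose pb (c d : cell) := `[< phase_eq (S c.1 c.2) (S d.1 d.2) >].
have pbr d : pb d d by apply/asboolP; apply: peq_refl.
pose m (d : cell) := [arg min_(c < d | pb c d) rk c].
have mP d : pb (m d) d /\ forall c, pb c d -> (rk (m d) <= rk c)%N.
  by rewrite /m; case: arg_minnP => // c pc hc; split.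
have minj : {in Rep &, injective m}.
  move=> d e dR eR me; case: (eqVneq d e) => // ne; exfalso.
  apply: (sep d e dR eR ne); apply: (@peq_trans _ _ (S (m d).1 (m d).2)).
    by apply: peq_sym; case: (mP d) => /asboolP.
  by rewrite me; case: (mP e) => /asboolP.
rewrite -(card_in_imset minj); apply: eq_card => c; rewrite /Fset inE.
apply/imsetP/forallP.
- case=> d dR ->{c} e; apply/implyP => lt; apply/asboolP => pe.
  case: (mP d) => /asboolP pm hm.
  have pe' : pb e d by apply/asboolP; exact: peq_trans pe pm.
  by have := hm e pe'; rewrite leqNgt lt.
- move=> hc; case: (cov c) => d dR pcd; exists d => //.
  case: (mP d) => /asboolP pm hm.
  have le : (rk (m d) <= rk c)%N by apply: hm; apply/asboolP.
  move: le; rewrite leq_eqVlt => /orP[/eqP/rk_inj //|lt].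
  have := hc (m d); rewrite lt /= => /asboolP []; apply: peq_trans pm _.
  exact: peq_sym.
Qed.

Section Alg.
Context (R : rcfType).
Local Notation C := R[i].
Local Notation vec := 'rV[C]_4.

Lemma blockE (a b g d x0 x2 y1 y3 p0 p1 q2 q3 : C) :
  (a != 0) || (b != 0) ->
  b * x0 = d * p0 -> a * y1 = d * p1 -> b * x2 = g * q2 -> a * y3 = g * q3 ->
  x0 * y3 * p1 * q2 = x2 * y1 * p0 * q3.
Proof.
move=> ab e0 e1 e2 e3.
case: (eqVneq a 0) => [a0|an]; case: (eqVneq b 0) => [b0|bn].
- by move: ab; rewrite a0 b0 eqxx.
- move: e1 e3; rewrite a0 !mul0r => /esym/eqP; rewrite mulf_eq0 => h1 /esym/eqP; rewrite mulf_eq0 => h3.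
  apply: (mulfI bn).
  transitivity ((b * x0) * y3 * p1 * q2); first by ring.
  transitivity ((b * x2) * y1 * p0 * q3); last by ring.
  rewrite e0 e2.
  by case/orP: h1 => /eqP h1; case/orP: h3 => /eqP h3; rewrite ?h1 ?h3 ?mulr0 ?mul0r //; ring.
- move: e0 e2; rewrite b0 !mul0r => /esym/eqP; rewrite mulf_eq0 => h0 /esym/eqP; rewrite mulf_eq0 => h2.
  apply: (mulfI an).
  transitivity (x0 * (a * y3) * p1 * q2); first by ring.
  transitivity (x2 * (a * y1) * p0 * q3); last by ring.
  rewrite e1 e3.
  by case/orP: h0 => /eqP h0; case/orP: h2 => /eqP h2; rewrite ?h0 ?h2 ?mulr0 ?mul0r //; ring.
- apply: (mulfI (mulf_neq0 an bn)).
  transitivity ((b * x0) * (a * y3) * p1 * q2); first by ring.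
  transitivity ((b * x2) * (a * y1) * p0 * q3); last by ring.
  by rewrite e0 e1 e2 e3; ring.
Qed.

Lemma blockN (a b g d x0 x2 y1 y3 p0 p1 q2 q3 : C) :
  (a != 0) || (b != 0) ->
  b * x0 = d * p0 -> a * y1 = d * p1 -> b * x2 = g * q2 -> a * y3 = g * q3 ->
  x0 != 0 -> x2 != 0 -> y1 != 0 -> y3 != 0 -> p0 != 0 -> p1 != 0 -> q2 != 0 -> q3 != 0 ->
  [&& b * x0 != 0, a * y1 != 0, b * x2 != 0 & a * y3 != 0].
Proof.
move=> ab e0 e1 e2 e3 nx0 nx2 ny1 ny3 np0 np1 nq2 nq3.
rewrite !mulf_eq0 !negb_or nx0 nx2 ny1 ny3 !andbT.
case/orP: ab => [an|bn].
- have dn : d != 0 by apply: contraNneq (mulf_neq0 an ny1) => d0; rewrite e1 d0 mul0r.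
  have gn : g != 0 by apply: contraNneq (mulf_neq0 an ny3) => g0; rewrite e3 g0 mul0r.
  suff bn : b != 0 by rewrite an bn.
  apply/eqP => b0; move: e0; rewrite b0 mul0r => /esym/eqP.
  by rewrite mulf_eq0 (negbTE dn) (negbTE np0).
- have dn : d != 0 by apply: contraNneq (mulf_neq0 bn nx0) => d0; rewrite e0 d0 mul0r.
  suff an : a != 0 by rewrite an bn.
  apply/eqP => a0; move: e1; rewrite a0 mul0r => /esym/eqP.
  by rewrite mulf_eq0 (negbTE dn) (negbTE np1).
Qed.

Lemma core_bool (a0 a1 b2 b3 c0 c2 d1 d3 : bool) :
  [|| c0, d3, a1 | b2] = [|| c2, d1, a0 | b3] ->
  [|| c0, d3, a0 | b3] = [|| c2, d1, a1 | b2] ->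
  ~~ (a0 && a1) -> ~~ (b2 && b3) -> ~~ (c0 && c2) -> ~~ (d1 && d3) ->
  [|| a0, a1, b2, b3, c0, c2, d1 | d3] ->
  [|| a1 && b3, a0 && b2, c2 && d3 | c0 && d1].
Proof.
by case: a0; case: a1; case: b2; case: b3; case: c0; case: c2; case: d1; case: d3.
Qed.

Lemma twoD (c0 c1 d0 d1 : C) :
  (c0 != 0) || (c1 != 0) -> (d0 != 0) || (d1 != 0) -> c0^* * d0 + c1^* * d1 = 0 ->
  ((d0 == 0) = (c1 == 0)) /\ ((d1 == 0) = (c0 == 0)).
Proof.
move=> nc nd e.
have H1 : d0 = 0 -> d1 != 0 by move=> z; move: nd; rewrite z eqxx.
have H2 : c1 = 0 -> c0 != 0 by move=> z; move: nc; rewrite z eqxx orbF.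
have H3 : d1 = 0 -> d0 != 0 by move=> z; move: nd; rewrite z eqxx orbF.
have H4 : c0 = 0 -> c1 != 0 by move=> z; move: nc; rewrite z eqxx.
split; apply/eqP/eqP.
- move=> z; move: e; rewrite z mulr0 add0r => /eqP; rewrite mulf_eq0 conjC_eq0 (negbTE (H1 z)) orbF.
  by move/eqP.
- move=> z; move: e; rewrite z conjC0 mul0r addr0 => /eqP; rewrite mulf_eq0 conjC_eq0 (negbTE (H2 z)) /=.
  by move/eqP.
- move=> z; move: e; rewrite z mulr0 addr0 => /eqP; rewrite mulf_eq0 conjC_eq0 (negbTE (H3 z)) orbF.
  by move/eqP.
- move=> z; move: e; rewrite z conjC0 mul0r add0r => /eqP; rewrite mulf_eq0 conjC_eq0 (negbTE (H4 z)) /=.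
  by move/eqP.
Qed.

Lemma parseval4 (a b c d : vec) : onb4 a b c d -> forall u v : vec,
  hdot u v = (hdot a u)^* * hdot a v + (hdot b u)^* * hdot b v
           + (hdot c u)^* * hdot c v + (hdot d u)^* * hdot d v.
Proof.
by move=> o u v; rewrite {1}(complete4 o u) !hdotDl !hdotZl.
Qed.

Lemma companion (a b c d u v : vec) : onb4 a b c d ->
  hdot u u = 1 -> hdot v v = 1 -> hdot u v = 0 ->
  hdot a u = 0 -> hdot b u = 0 -> hdot a v = 0 -> hdot b v = 0 ->
  [/\ (hdot c v == 0) = (hdot d u == 0), (hdot d v == 0) = (hdot c u == 0)
    & (hdot c u != 0) || (hdot d u != 0)].
Proof.
move=> o uu vv uv au bu av bv.
have nz (w : vec) : hdot w w = 1 -> hdot a w = 0 -> hdot b w = 0 -> (hdot c w != 0) || (hdot d w != 0).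
  move=> ww aw bw; rewrite -negb_and; apply/negP => /andP[/eqP cw /eqP dw].
  move: ww; rewrite (parseval4 o) aw bw cw dw !mulr0 !addr0 => /eqP.
  by rewrite eq_sym oner_eq0.
have nu := nz u uu au bu; have nv := nz v vv av bv.
have e : (hdot c u)^* * hdot c v + (hdot d u)^* * hdot d v = 0.
  by move: uv; rewrite (parseval4 o) au bu av bv conjC0 !mul0r !add0r.
by have [h1 h2] := twoD nu nv e; split.
Qed.

Lemma nz_pair (a b c d u : vec) : onb4 a b c d -> hdot u u = 1 ->
  hdot a u = 0 -> hdot b u = 0 -> (hdot c u != 0) || (hdot d u != 0).
Proof.
move=> o uu au bu; rewrite -negb_and; apply/negP => /andP[/eqP cu /eqP du].
move: uu; rewrite (parseval4 o) au bu cu du !mulr0 !addr0 => /eqP.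
by rewrite eq_sym oner_eq0.
Qed.

Lemma coordsL (e y x v : vec) (a b : C) : v = a *: y + b *: x ->
  hdot e v = a * hdot e y + b * hdot e x.
Proof. by move=> ->; rewrite hdotDr !hdotZr. Qed.

Lemma span_nz (y x v : vec) : hdot v v = 1 -> v = hdot y v *: y + hdot x v *: x ->
  (hdot y v != 0) || (hdot x v != 0).
Proof.
move=> vv e; rewrite -negb_and; apply/negP => /andP[/eqP h1 /eqP h2].
by move: vv; rewrite e h1 h2 !scale0r addr0 hdot0r => /eqP; rewrite eq_sym oner_eq0.
Qed.
End Alg.

Definition newb (P Q X Y : bool) (c : cell) : bool :=
  let r := nat_of_ord c.1 in let k := nat_of_ord c.2 in
  if (r < 2)%N && (k < 2)%N then true
  else if (r < 2)%N then (if r == 0%N then ~~Q else ~~P)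
  else if (k < 2)%N then (if k == 0%N then ~~Y else ~~X)
  else ~~ [|| P, Q, X | Y].
Lemma card_newb P Q X Y : ([|| P, Q, X | Y] ==> (P && Q) || (X && Y)) ->
  (#|[set c | newb P Q X Y c]| \in [:: 4; 6; 8; 16])%N.
Proof.
move=> h.
have -> : #|[set c | newb P Q X Y c]| = (\sum_(i < 4) \sum_(j < 4) (newb P Q X Y (i, j) : nat))%N.
  rewrite -sum1_card big_mkcond /= pair_bigA /=; apply: eq_bigr => [[i j]] _.
  by rewrite inE; case: newb.
rewrite !big_ord_recl !big_ord0 /=.
move: h.
by case: P; case: Q; case: X; case: Y => // _; vm_compute.
Qed.

Lemma blk11 (R : rcfType) (e0 e1 e2 e3 y x q p v : 'rV[R[i]]_4) :
  hdot v v = 1 ->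
  hdot e0 y = 0 -> hdot e2 y = 0 -> hdot e1 x = 0 -> hdot e3 x = 0 ->
  hdot e0 q = 0 -> hdot e1 q = 0 -> hdot e2 p = 0 -> hdot e3 p = 0 ->
  v = hdot y v *: y + hdot x v *: x -> v = hdot q v *: q + hdot p v *: p ->
  [/\ (hdot y v != 0) || (hdot x v != 0),
      hdot e0 v = hdot x v * hdot e0 x /\ hdot e0 v = hdot p v * hdot e0 p,
      hdot e1 v = hdot y v * hdot e1 y /\ hdot e1 v = hdot p v * hdot e1 p,
      hdot e2 v = hdot x v * hdot e2 x /\ hdot e2 v = hdot q v * hdot e2 q &
      hdot e3 v = hdot y v * hdot e3 y /\ hdot e3 v = hdot q v * hdot e3 q].
Proof.
move=> vv y0 y2 x1 x3 q0 q1 p2 p3 er ec; split.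
- exact: span_nz vv er.
- by rewrite {1}(coordsL e0 er) {1}(coordsL e0 ec) y0 q0 !mulr0 !add0r.
- by rewrite {1}(coordsL e1 er) {1}(coordsL e1 ec) x1 q1 !mulr0 !addr0 add0r.
- by rewrite {1}(coordsL e2 er) {1}(coordsL e2 ec) y2 p2 !mulr0 !addr0 add0r.
- by rewrite {1}(coordsL e3 er) {1}(coordsL e3 ec) x3 p3 !mulr0 !addr0.
Qed.

Lemma evt_bool (a0 a1 b2 b3 c0 c2 d1 d3 : bool) :
  ([|| a0, a1, b2, b3, c0, c2, d1 | d3] -> [|| a1 && b3, a0 && b2, c2 && d3 | c0 && d1]) ->
  [|| a0 || a1, b2 || b3, c0 || c2 | d1 || d3] ==> ((a0 || a1) && (b2 || b3)) || ((c0 || c2) && (d1 || d3)).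
Proof.
by case: a0; case: a1; case: b2; case: b3; case: c0; case: c2; case: d1; case: d3 => //= /(_ isT).
Qed.

Lemma blk11E (R : rcfType) (e0 e1 e2 e3 y x q p v : 'rV[R[i]]_4) :
  hdot v v = 1 ->
  hdot e0 y = 0 -> hdot e2 y = 0 -> hdot e1 x = 0 -> hdot e3 x = 0 ->
  hdot e0 q = 0 -> hdot e1 q = 0 -> hdot e2 p = 0 -> hdot e3 p = 0 ->
  v = hdot y v *: y + hdot x v *: x -> v = hdot q v *: q + hdot p v *: p ->
  hdot e0 x * hdot e3 y * hdot e1 p * hdot e2 q = hdot e2 x * hdot e1 y * hdot e0 p * hdot e3 q.
Proof.
move=> vv y0 y2 x1 x3 q0 q1 p2 p3 er ec.
have [ab [h0 h0'] [h1 h1'] [h2 h2'] [h3 h3']] := blk11 vv y0 y2 x1 x3 q0 q1 p2 p3 er ec.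
apply: (blockE (g := hdot q v) (d := hdot p v) ab); by rewrite -?h0 -?h1 -?h2 -?h3.
Qed.

Lemma blk11N (R : rcfType) (e0 e1 e2 e3 y x q p v : 'rV[R[i]]_4) :
  hdot v v = 1 ->
  hdot e0 y = 0 -> hdot e2 y = 0 -> hdot e1 x = 0 -> hdot e3 x = 0 ->
  hdot e0 q = 0 -> hdot e1 q = 0 -> hdot e2 p = 0 -> hdot e3 p = 0 ->
  v = hdot y v *: y + hdot x v *: x -> v = hdot q v *: q + hdot p v *: p ->
  hdot e0 x != 0 -> hdot e2 x != 0 -> hdot e1 y != 0 -> hdot e3 y != 0 ->
  hdot e0 p != 0 -> hdot e1 p != 0 -> hdot e2 q != 0 -> hdot e3 q != 0 ->
  [&& hdot e0 v != 0, hdot e1 v != 0, hdot e2 v != 0 & hdot e3 v != 0].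
Proof.
move=> vv y0 y2 x1 x3 q0 q1 p2 p3 er ec n1 n2 n3 n4 n5 n6 n7 n8.
have [ab [h0 h0'] [h1 h1'] [h2 h2'] [h3 h3']] := blk11 vv y0 y2 x1 x3 q0 q1 p2 p3 er ec.
have := blockN (g := hdot q v) (d := hdot p v) ab _ _ _ _ n1 n2 n3 n4 n5 n6 n7 n8.
rewrite -h0 -h1 -h2 -h3; apply; by rewrite -?h0 -?h1 -?h2 -?h3.
Qed.

Definition SQ (R : rcfType) (S : 'I_4 -> 'I_4 -> 'rV[R[i]]_4) :=
  (forall i j, hdot (S i j) (S i j) = 1) /\ (forall i j k l, adj i j k l -> hdot (S i j) (S k l) = 0).

Definition evP (R : rcfType) (S : 'I_4 -> 'I_4 -> 'rV[R[i]]_4) :=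
  (hdot (S o0 o0) (S o1 o2) == 0) || (hdot (S o0 o1) (S o1 o2) == 0).
Definition evQ (R : rcfType) (S : 'I_4 -> 'I_4 -> 'rV[R[i]]_4) :=
  (hdot (S o1 o0) (S o0 o2) == 0) || (hdot (S o1 o1) (S o0 o2) == 0).
Definition evX (R : rcfType) (S : 'I_4 -> 'I_4 -> 'rV[R[i]]_4) :=
  (hdot (S o0 o0) (S o2 o1) == 0) || (hdot (S o1 o0) (S o2 o1) == 0).
Definition evY (R : rcfType) (S : 'I_4 -> 'I_4 -> 'rV[R[i]]_4) :=
  (hdot (S o0 o1) (S o2 o0) == 0) || (hdot (S o1 o1) (S o2 o0) == 0).

Ltac onbT U O := repeat split; first [apply: U | apply: O; by []].
Ltac ort O := apply: O; by [].

Lemma core_lemma (R : rcfType) (S : 'I_4 -> 'I_4 -> 'rV[R[i]]_4) : SQ S ->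
  [|| hdot (S o0 o0) (S o1 o2) == 0, hdot (S o0 o1) (S o1 o2) == 0,
  hdot (S o1 o0) (S o0 o2) == 0, hdot (S o1 o1) (S o0 o2) == 0,
  hdot (S o0 o0) (S o2 o1) == 0, hdot (S o1 o0) (S o2 o1) == 0,
  hdot (S o0 o1) (S o2 o0) == 0 | hdot (S o1 o1) (S o2 o0) == 0] ->
  [|| (hdot (S o0 o1) (S o1 o2) == 0) && (hdot (S o1 o1) (S o0 o2) == 0),
      (hdot (S o0 o0) (S o1 o2) == 0) && (hdot (S o1 o0) (S o0 o2) == 0),
      (hdot (S o1 o0) (S o2 o1) == 0) && (hdot (S o1 o1) (S o2 o0) == 0) |
      (hdot (S o0 o0) (S o2 o1) == 0) && (hdot (S o0 o1) (S o2 o0) == 0)].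
Proof.
case=> U O.
have [cp1 cp2 cpn] := @companion _ (S o1 o0) (S o1 o1) (S o0 o0) (S o0 o1) (S o1 o2) (S o1 o3)
  ltac:(onbT U O) (U _ _) (U _ _) ltac:(ort O) ltac:(ort O) ltac:(ort O) ltac:(ort O) ltac:(ort O).
have [cq1 cq2 cqn] := @companion _ (S o0 o0) (S o0 o1) (S o1 o0) (S o1 o1) (S o0 o2) (S o0 o3)
  ltac:(onbT U O) (U _ _) (U _ _) ltac:(ort O) ltac:(ort O) ltac:(ort O) ltac:(ort O) ltac:(ort O).
have xn := @nz_pair _ (S o0 o1) (S o1 o1) (S o0 o0) (S o1 o0) (S o2 o1)
  ltac:(onbT U O) (U _ _) ltac:(ort O) ltac:(ort O).
have yn := @nz_pair _ (S o0 o0) (S o1 o0) (S o0 o1) (S o1 o1) (S o2 o0)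
  ltac:(onbT U O) (U _ _) ltac:(ort O) ltac:(ort O).
have E1 := @blk11E _ (S o0 o0) (S o0 o1) (S o1 o0) (S o1 o1) (S o2 o0) (S o2 o1) (S o0 o2) (S o1 o2) (S o3 o3)
  (U _ _) ltac:(ort O) ltac:(ort O) ltac:(ort O) ltac:(ort O) ltac:(ort O) ltac:(ort O) ltac:(ort O) ltac:(ort O)
  (@onb_span _ (S o2 o0) (S o2 o1) (S o2 o2) (S o2 o3) (S o3 o3) ltac:(onbT U O) ltac:(ort O) ltac:(ort O))
  (@onb_span _ (S o0 o2) (S o1 o2) (S o2 o2) (S o3 o2) (S o3 o3) ltac:(onbT U O) ltac:(ort O) ltac:(ort O)).
have E2 := @blk11E _ (S o0 o0) (S o0 o1) (S o1 o0) (S o1 o1) (S o2 o0) (S o2 o1) (S o0 o3) (S o1 o3) (S o3 o2)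
  (U _ _) ltac:(ort O) ltac:(ort O) ltac:(ort O) ltac:(ort O) ltac:(ort O) ltac:(ort O) ltac:(ort O) ltac:(ort O)
  (@onb_span _ (S o2 o0) (S o2 o1) (S o2 o2) (S o2 o3) (S o3 o2) ltac:(onbT U O) ltac:(ort O) ltac:(ort O))
  (@onb_span _ (S o0 o3) (S o1 o3) (S o2 o3) (S o3 o3) (S o3 o2) ltac:(onbT U O) ltac:(ort O) ltac:(ort O)).
have {E1}E1 := congr1 (fun z => z == 0) E1; rewrite /= !mulf_eq0 -!orbA in E1.
have {E2}E2 := congr1 (fun z => z == 0) E2; rewrite /= !mulf_eq0 -!orbA cp1 cp2 cq1 cq2 in E2.
by apply: core_bool E1 E2 _ _ _ _; rewrite negb_and.
Qed.

Lemma constraint (R : rcfType) (S : 'I_4 -> 'I_4 -> 'rV[R[i]]_4) : SQ S ->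
  [|| evP S, evQ S, evX S | evY S] ==> (evP S && evQ S) || (evX S && evY S).
Proof.
move=> hS.
have key := @evt_bool (hdot (S o0 o0) (S o1 o2) == 0) (hdot (S o0 o1) (S o1 o2) == 0)
  (hdot (S o1 o0) (S o0 o2) == 0) (hdot (S o1 o1) (S o0 o2) == 0)
  (hdot (S o0 o0) (S o2 o1) == 0) (hdot (S o1 o0) (S o2 o1) == 0)
  (hdot (S o0 o1) (S o2 o0) == 0) (hdot (S o1 o1) (S o2 o0) == 0).
move: (key (core_lemma hS)); rewrite -!orbA /evP /evQ /evX /evY; apply.
Qed.

Lemma FsetP (R : rcfType) (S : 'I_4 -> 'I_4 -> 'rV[R[i]]_4) (c : cell) (b : bool) :
  (b -> forall d : cell, (rk d < rk c)%N -> ~ phase_eq (S d.1 d.2) (S c.1 c.2)) ->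
  (~~ b -> exists2 d : cell, (rk d < rk c)%N & phase_eq (S d.1 d.2) (S c.1 c.2)) ->
  (c \in Fset S) = b.
Proof.
rewrite /Fset inE; case: b => [h _ | _ h].
- apply/forallP => d; apply/implyP => lt; apply/asboolP; exact: h.
- apply/negP => /forallP H; case: (h isT) => d lt pe.
  by move: (H d); rewrite lt /= => /asboolP; apply.
Qed.

Lemma forall_cells (P : 'I_4 -> 'I_4 -> Prop) :
  P o0 o0 -> P o0 o1 -> P o0 o2 -> P o0 o3 ->
  P o1 o0 -> P o1 o1 -> P o1 o2 -> P o1 o3 ->
  P o2 o0 -> P o2 o1 -> P o2 o2 -> P o2 o3 ->
  P o3 o0 -> P o3 o1 -> P o3 o2 -> P o3 o3 -> forall d : cell, P d.1 d.2.
Proof.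
move=> ? ? ? ? ? ? ? ? ? ? ? ? ? ? ? ? [a b] /=.
by case: (ord4P a) => ->; case: (ord4P b) => ->.
Qed.

Ltac sepd S U O :=
  first [ apply: npeq_orth; [apply: U | apply: O; by []]
        | apply: (npeq_zero (e := S o0 o0)); [apply: O; by [] | by []]
        | apply: (npeq_zero (e := S o0 o1)); [apply: O; by [] | by []]
        | apply: (npeq_zero (e := S o1 o0)); [apply: O; by [] | by []]
        | apply: (npeq_zero (e := S o1 o1)); [apply: O; by [] | by []] ].
Ltac newT S U O := apply: (forall_cells (P := fun i j => (rk (i, j) < rk _)%N -> ~ phase_eq (S i j) _)); rewrite /= => //= _; sepd S U O.
Ltac clo O := first [ort O | by apply/eqP | by []].
Ltac witT d a b c U O := exists d; [by [] | rewrite /=; apply: peq_sym;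
   apply: (@onb_phase _ a b c); [onbT U O | apply: U | clo O | clo O | clo O]].


Ltac getb11 lem S U O y x q p v r3 r4 c3 c4 :=
  have := @lem _ (S o0 o0) (S o0 o1) (S o1 o0) (S o1 o1) y x q p v (U _ _)
    ltac:(ort O) ltac:(ort O) ltac:(ort O) ltac:(ort O) ltac:(ort O) ltac:(ort O) ltac:(ort O) ltac:(ort O)
    (@onb_span _ y x r3 r4 v ltac:(onbT U O) ltac:(ort O) ltac:(ort O))
    (@onb_span _ q p c3 c4 v ltac:(onbT U O) ltac:(ort O) ltac:(ort O)).

Definition nz4 (R : rcfType) (S : 'I_4 -> 'I_4 -> 'rV[R[i]]_4) (v : 'rV[R[i]]_4) :=
  [&& hdot (S o0 o0) v != 0, hdot (S o0 o1) v != 0, hdot (S o1 o0) v != 0 & hdot (S o1 o1) v != 0].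

Lemma block11_new (R : rcfType) (S : 'I_4 -> 'I_4 -> 'rV[R[i]]_4) : SQ S ->
  ~~ [|| evP S, evQ S, evX S | evY S] ->
  [/\ nz4 S (S o2 o2), nz4 S (S o2 o3), nz4 S (S o3 o2) & nz4 S (S o3 o3)].
Proof.
case=> U O.
have [cp1 cp2 cpn] := @companion _ (S o1 o0) (S o1 o1) (S o0 o0) (S o0 o1) (S o1 o2) (S o1 o3)
  ltac:(onbT U O) (U _ _) (U _ _) ltac:(ort O) ltac:(ort O) ltac:(ort O) ltac:(ort O) ltac:(ort O).
have [cq1 cq2 cqn] := @companion _ (S o0 o0) (S o0 o1) (S o1 o0) (S o1 o1) (S o0 o2) (S o0 o3)
  ltac:(onbT U O) (U _ _) (U _ _) ltac:(ort O) ltac:(ort O) ltac:(ort O) ltac:(ort O) ltac:(ort O).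
have [cx1 cx2 cxn] := @companion _ (S o0 o1) (S o1 o1) (S o0 o0) (S o1 o0) (S o2 o1) (S o3 o1)
  ltac:(onbT U O) (U _ _) (U _ _) ltac:(ort O) ltac:(ort O) ltac:(ort O) ltac:(ort O) ltac:(ort O).
have [cy1 cy2 cyn] := @companion _ (S o0 o0) (S o1 o0) (S o0 o1) (S o1 o1) (S o2 o0) (S o3 o0)
  ltac:(onbT U O) (U _ _) (U _ _) ltac:(ort O) ltac:(ort O) ltac:(ort O) ltac:(ort O) ltac:(ort O).
rewrite /evP /evQ /evX /evY !negb_or => /and4P[/andP[np0 np1] /andP[nq2 nq3] /andP[nx0 nx2] /andP[ny1 ny3]].
have nr0 : hdot (S o0 o0) (S o1 o3) != 0 by rewrite cp1.
have nr1 : hdot (S o0 o1) (S o1 o3) != 0 by rewrite cp2.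
have ns2 : hdot (S o1 o0) (S o0 o3) != 0 by rewrite cq1.
have ns3 : hdot (S o1 o1) (S o0 o3) != 0 by rewrite cq2.
have nx'0 : hdot (S o0 o0) (S o3 o1) != 0 by rewrite cx1.
have nx'2 : hdot (S o1 o0) (S o3 o1) != 0 by rewrite cx2.
have ny'1 : hdot (S o0 o1) (S o3 o0) != 0 by rewrite cy1.
have ny'3 : hdot (S o1 o1) (S o3 o0) != 0 by rewrite cy2.
split; rewrite /nz4.
- getb11 blk11N S U O (S o3 o0) (S o3 o1) (S o0 o3) (S o1 o3) (S o2 o2) (S o3 o2) (S o3 o3) (S o2 o3) (S o3 o3); by apply.
- getb11 blk11N S U O (S o3 o0) (S o3 o1) (S o0 o2) (S o1 o2) (S o2 o3) (S o3 o2) (S o3 o3) (S o2 o2) (S o3 o2); by apply.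
- getb11 blk11N S U O (S o2 o0) (S o2 o1) (S o0 o3) (S o1 o3) (S o3 o2) (S o2 o2) (S o2 o3) (S o2 o3) (S o3 o3); by apply.
- getb11 blk11N S U O (S o2 o0) (S o2 o1) (S o0 o2) (S o1 o2) (S o3 o3) (S o2 o2) (S o2 o3) (S o2 o2) (S o3 o2); by apply.
Qed.


Lemma block11_old (R : rcfType) (S : 'I_4 -> 'I_4 -> 'rV[R[i]]_4) : SQ S ->
  [|| evP S, evQ S, evX S | evY S] ->
  [/\ exists2 d : cell, (rk d < rk (o2, o2))%N & phase_eq (S d.1 d.2) (S o2 o2),
      exists2 d : cell, (rk d < rk (o2, o3))%N & phase_eq (S d.1 d.2) (S o2 o3),
      exists2 d : cell, (rk d < rk (o3, o2))%N & phase_eq (S d.1 d.2) (S o3 o2) &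
      exists2 d : cell, (rk d < rk (o3, o3))%N & phase_eq (S d.1 d.2) (S o3 o3)].
Proof.
move=> hS ev; have core := core_lemma hS; case: hS => U O.
have [cp1 cp2 cpn] := @companion _ (S o1 o0) (S o1 o1) (S o0 o0) (S o0 o1) (S o1 o2) (S o1 o3)
  ltac:(onbT U O) (U _ _) (U _ _) ltac:(ort O) ltac:(ort O) ltac:(ort O) ltac:(ort O) ltac:(ort O).
have [cq1 cq2 cqn] := @companion _ (S o0 o0) (S o0 o1) (S o1 o0) (S o1 o1) (S o0 o2) (S o0 o3)
  ltac:(onbT U O) (U _ _) (U _ _) ltac:(ort O) ltac:(ort O) ltac:(ort O) ltac:(ort O) ltac:(ort O).
have [cx1 cx2 cxn] := @companion _ (S o0 o1) (S o1 o1) (S o0 o0) (S o1 o0) (S o2 o1) (S o3 o1)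
  ltac:(onbT U O) (U _ _) (U _ _) ltac:(ort O) ltac:(ort O) ltac:(ort O) ltac:(ort O) ltac:(ort O).
have [cy1 cy2 cyn] := @companion _ (S o0 o0) (S o1 o0) (S o0 o1) (S o1 o1) (S o2 o0) (S o3 o0)
  ltac:(onbT U O) (U _ _) (U _ _) ltac:(ort O) ltac:(ort O) ltac:(ort O) ltac:(ort O) ltac:(ort O).
getb11 blk11 S U O (S o3 o0) (S o3 o1) (S o0 o3) (S o1 o3) (S o2 o2) (S o3 o2) (S o3 o3) (S o2 o3) (S o3 o3).
move=> [_ [a0 a0'] [a1 a1'] [a2 a2'] [a3 a3']].
getb11 blk11 S U O (S o3 o0) (S o3 o1) (S o0 o2) (S o1 o2) (S o2 o3) (S o3 o2) (S o3 o3) (S o2 o2) (S o3 o2).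
move=> [_ [b0 b0'] [b1 b1'] [b2 b2'] [b3 b3']].
getb11 blk11 S U O (S o2 o0) (S o2 o1) (S o0 o3) (S o1 o3) (S o3 o2) (S o2 o2) (S o2 o3) (S o2 o3) (S o3 o3).
move=> [_ [k0 k0'] [k1 k1'] [k2 k2'] [k3 k3']].
getb11 blk11 S U O (S o2 o0) (S o2 o1) (S o0 o2) (S o1 o2) (S o3 o3) (S o2 o2) (S o2 o3) (S o2 o2) (S o3 o2).
move=> [_ [m0 m0'] [m1 m1'] [m2 m2'] [m3 m3']].
move: ev; rewrite /evP /evQ /evX /evY -!orbA => /core /or4P[] /andP[/eqP z1 /eqP z2].
- have r0 : hdot (S o0 o0) (S o1 o3) = 0 by apply/eqP; rewrite cp1 z1.
  have s2 : hdot (S o1 o0) (S o0 o3) = 0 by apply/eqP; rewrite cq1 z2.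
  split.
  + have : hdot (S o0 o0) (S o2 o2) = 0 by rewrite a0' r0 mulr0.
    move=> ?; have : hdot (S o1 o0) (S o2 o2) = 0 by rewrite a2' s2 mulr0.
    move=> ?; witT (o3, o0) (S o0 o0) (S o1 o0) (S o2 o0) U O.
  + have : hdot (S o0 o1) (S o2 o3) = 0 by rewrite b1' z1 mulr0.
    move=> ?; have : hdot (S o1 o1) (S o2 o3) = 0 by rewrite b3' z2 mulr0.
    move=> ?; witT (o3, o1) (S o0 o1) (S o1 o1) (S o2 o1) U O.
  + have : hdot (S o0 o0) (S o3 o2) = 0 by rewrite k0' r0 mulr0.
    move=> ?; have : hdot (S o1 o0) (S o3 o2) = 0 by rewrite k2' s2 mulr0.
    move=> ?; witT (o2, o0) (S o0 o0) (S o1 o0) (S o3 o0) U O.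
  + have : hdot (S o0 o1) (S o3 o3) = 0 by rewrite m1' z1 mulr0.
    move=> ?; have : hdot (S o1 o1) (S o3 o3) = 0 by rewrite m3' z2 mulr0.
    move=> ?; witT (o2, o1) (S o0 o1) (S o1 o1) (S o3 o1) U O.
- have r1 : hdot (S o0 o1) (S o1 o3) = 0 by apply/eqP; rewrite cp2 z1.
  have s3 : hdot (S o1 o1) (S o0 o3) = 0 by apply/eqP; rewrite cq2 z2.
  split.
  + have : hdot (S o0 o1) (S o2 o2) = 0 by rewrite a1' r1 mulr0.
    move=> ?; have : hdot (S o1 o1) (S o2 o2) = 0 by rewrite a3' s3 mulr0.
    move=> ?; witT (o3, o1) (S o0 o1) (S o1 o1) (S o2 o1) U O.
  + have : hdot (S o0 o0) (S o2 o3) = 0 by rewrite b0' z1 mulr0.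
    move=> ?; have : hdot (S o1 o0) (S o2 o3) = 0 by rewrite b2' z2 mulr0.
    move=> ?; witT (o3, o0) (S o0 o0) (S o1 o0) (S o2 o0) U O.
  + have : hdot (S o0 o1) (S o3 o2) = 0 by rewrite k1' r1 mulr0.
    move=> ?; have : hdot (S o1 o1) (S o3 o2) = 0 by rewrite k3' s3 mulr0.
    move=> ?; witT (o2, o1) (S o0 o1) (S o1 o1) (S o3 o1) U O.
  + have : hdot (S o0 o0) (S o3 o3) = 0 by rewrite m0' z1 mulr0.
    move=> ?; have : hdot (S o1 o0) (S o3 o3) = 0 by rewrite m2' z2 mulr0.
    move=> ?; witT (o2, o0) (S o0 o0) (S o1 o0) (S o3 o0) U O.
- have x0 : hdot (S o0 o0) (S o3 o1) = 0 by apply/eqP; rewrite cx1 z1.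
  have y1 : hdot (S o0 o1) (S o3 o0) = 0 by apply/eqP; rewrite cy1 z2.
  split.
  + have : hdot (S o0 o0) (S o2 o2) = 0 by rewrite a0 x0 mulr0.
    move=> ?; have : hdot (S o0 o1) (S o2 o2) = 0 by rewrite a1 y1 mulr0.
    move=> ?; witT (o0, o3) (S o0 o0) (S o0 o1) (S o0 o2) U O.
  + have : hdot (S o0 o0) (S o2 o3) = 0 by rewrite b0 x0 mulr0.
    move=> ?; have : hdot (S o0 o1) (S o2 o3) = 0 by rewrite b1 y1 mulr0.
    move=> ?; witT (o0, o2) (S o0 o0) (S o0 o1) (S o0 o3) U O.
  + have : hdot (S o1 o0) (S o3 o2) = 0 by rewrite k2 z1 mulr0.
    move=> ?; have : hdot (S o1 o1) (S o3 o2) = 0 by rewrite k3 z2 mulr0.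
    move=> ?; witT (o1, o3) (S o1 o0) (S o1 o1) (S o1 o2) U O.
  + have : hdot (S o1 o0) (S o3 o3) = 0 by rewrite m2 z1 mulr0.
    move=> ?; have : hdot (S o1 o1) (S o3 o3) = 0 by rewrite m3 z2 mulr0.
    move=> ?; witT (o1, o2) (S o1 o0) (S o1 o1) (S o1 o3) U O.
- have x2 : hdot (S o1 o0) (S o3 o1) = 0 by apply/eqP; rewrite cx2 z1.
  have y3 : hdot (S o1 o1) (S o3 o0) = 0 by apply/eqP; rewrite cy2 z2.
  split.
  + have : hdot (S o1 o0) (S o2 o2) = 0 by rewrite a2 x2 mulr0.
    move=> ?; have : hdot (S o1 o1) (S o2 o2) = 0 by rewrite a3 y3 mulr0.
    move=> ?; witT (o1, o3) (S o1 o0) (S o1 o1) (S o1 o2) U O.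
  + have : hdot (S o1 o0) (S o2 o3) = 0 by rewrite b2 x2 mulr0.
    move=> ?; have : hdot (S o1 o1) (S o2 o3) = 0 by rewrite b3 y3 mulr0.
    move=> ?; witT (o1, o2) (S o1 o0) (S o1 o1) (S o1 o3) U O.
  + have : hdot (S o0 o0) (S o3 o2) = 0 by rewrite k0 z1 mulr0.
    move=> ?; have : hdot (S o0 o1) (S o3 o2) = 0 by rewrite k1 z2 mulr0.
    move=> ?; witT (o0, o3) (S o0 o0) (S o0 o1) (S o0 o2) U O.
  + have : hdot (S o0 o0) (S o3 o3) = 0 by rewrite m0 z1 mulr0.
    move=> ?; have : hdot (S o0 o1) (S o3 o3) = 0 by rewrite m1 z2 mulr0.
    move=> ?; witT (o0, o2) (S o0 o0) (S o0 o1) (S o0 o3) U O.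
Qed.

Lemma Fset_eq (R : rcfType) (S : 'I_4 -> 'I_4 -> 'rV[R[i]]_4) : SQ S ->
  Fset S = [set c | newb (evP S) (evQ S) (evX S) (evY S) c].
Proof.
move=> hS; have B11n := block11_new hS; have B11o := block11_old hS; case: hS => U O.
have [cp1 cp2 cpn] := @companion _ (S o1 o0) (S o1 o1) (S o0 o0) (S o0 o1) (S o1 o2) (S o1 o3)
  ltac:(onbT U O) (U _ _) (U _ _) ltac:(ort O) ltac:(ort O) ltac:(ort O) ltac:(ort O) ltac:(ort O).
have [cq1 cq2 cqn] := @companion _ (S o0 o0) (S o0 o1) (S o1 o0) (S o1 o1) (S o0 o2) (S o0 o3)
  ltac:(onbT U O) (U _ _) (U _ _) ltac:(ort O) ltac:(ort O) ltac:(ort O) ltac:(ort O) ltac:(ort O).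
have [cx1 cx2 cxn] := @companion _ (S o0 o1) (S o1 o1) (S o0 o0) (S o1 o0) (S o2 o1) (S o3 o1)
  ltac:(onbT U O) (U _ _) (U _ _) ltac:(ort O) ltac:(ort O) ltac:(ort O) ltac:(ort O) ltac:(ort O).
have [cy1 cy2 cyn] := @companion _ (S o0 o0) (S o1 o0) (S o0 o1) (S o1 o1) (S o2 o0) (S o3 o0)
  ltac:(onbT U O) (U _ _) (U _ _) ltac:(ort O) ltac:(ort O) ltac:(ort O) ltac:(ort O) ltac:(ort O).
apply/setP => -[c1 c2]; rewrite [in RHS]inE.
case: (ord4P c1) => ->; case: (ord4P c2) => ->; apply: FsetP; rewrite /newb /=.
- by move=> _; newT S U O.
- by [].
- by move=> _; newT S U O.
- by [].
- rewrite /evQ negb_or => /andP[n1 n2].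
  by newT S U O.
- rewrite negbK /evQ => /orP[] h.
  + witT (o1, o1) (S o0 o0) (S o0 o1) (S o1 o0) U O.
  + witT (o1, o0) (S o0 o0) (S o0 o1) (S o1 o1) U O.
- rewrite /evQ negb_or => /andP[n1 n2].
  have s2 : hdot (S o1 o0) (S o0 o3) != 0 by rewrite cq1.
  have s3 : hdot (S o1 o1) (S o0 o3) != 0 by rewrite cq2.
  by newT S U O.
- rewrite negbK /evQ => /orP[] h.
  + have h' : hdot (S o1 o1) (S o0 o3) == 0 by rewrite cq2.
    witT (o1, o0) (S o0 o0) (S o0 o1) (S o1 o1) U O.
  + have h' : hdot (S o1 o0) (S o0 o3) == 0 by rewrite cq1.
    witT (o1, o1) (S o0 o0) (S o0 o1) (S o1 o0) U O.
- by move=> _; newT S U O.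
- by [].
- by move=> _; newT S U O.
- by [].
- rewrite /evP negb_or => /andP[n1 n2].
  by newT S U O.
- rewrite negbK /evP => /orP[] h.
  + witT (o0, o1) (S o1 o0) (S o1 o1) (S o0 o0) U O.
  + witT (o0, o0) (S o1 o0) (S o1 o1) (S o0 o1) U O.
- rewrite /evP negb_or => /andP[n1 n2].
  have r0 : hdot (S o0 o0) (S o1 o3) != 0 by rewrite cp1.
  have r1 : hdot (S o0 o1) (S o1 o3) != 0 by rewrite cp2.
  by newT S U O.
- rewrite negbK /evP => /orP[] h.
  + have h' : hdot (S o0 o1) (S o1 o3) == 0 by rewrite cp2.
    witT (o0, o0) (S o1 o0) (S o1 o1) (S o0 o1) U O.
  + have h' : hdot (S o0 o0) (S o1 o3) == 0 by rewrite cp1.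
    witT (o0, o1) (S o1 o0) (S o1 o1) (S o0 o0) U O.
- rewrite /evY negb_or => /andP[n1 n2].
  by newT S U O.
- rewrite negbK /evY => /orP[] h.
  + witT (o1, o1) (S o0 o0) (S o1 o0) (S o0 o1) U O.
  + witT (o0, o1) (S o0 o0) (S o1 o0) (S o1 o1) U O.
- rewrite /evX negb_or => /andP[n1 n2].
  by newT S U O.
- rewrite negbK /evX => /orP[] h.
  + witT (o1, o0) (S o0 o1) (S o1 o1) (S o0 o0) U O.
  + witT (o0, o0) (S o0 o1) (S o1 o1) (S o1 o0) U O.
- by move=> /B11n[/and4P[n0 n1 n2 n3] _ _ _]; newT S U O.
- by rewrite negbK => /B11o[? _ _ _].
- by move=> /B11n[_ /and4P[n0 n1 n2 n3] _ _]; newT S U O.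
- by rewrite negbK => /B11o[_ ? _ _].
- rewrite /evY negb_or => /andP[n1 n2].
  have y1 : hdot (S o0 o1) (S o3 o0) != 0 by rewrite cy1.
  have y3 : hdot (S o1 o1) (S o3 o0) != 0 by rewrite cy2.
  by newT S U O.
- rewrite negbK /evY => /orP[] h.
  + have h' : hdot (S o1 o1) (S o3 o0) == 0 by rewrite cy2.
    witT (o0, o1) (S o0 o0) (S o1 o0) (S o1 o1) U O.
  + have h' : hdot (S o0 o1) (S o3 o0) == 0 by rewrite cy1.
    witT (o1, o1) (S o0 o0) (S o1 o0) (S o0 o1) U O.
- rewrite /evX negb_or => /andP[n1 n2].
  have x0 : hdot (S o0 o0) (S o3 o1) != 0 by rewrite cx1.
  have x2 : hdot (S o1 o0) (S o3 o1) != 0 by rewrite cx2.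
  by newT S U O.
- rewrite negbK /evX => /orP[] h.
  + have h' : hdot (S o1 o0) (S o3 o1) == 0 by rewrite cx2.
    witT (o0, o0) (S o0 o1) (S o1 o1) (S o1 o0) U O.
  + have h' : hdot (S o0 o0) (S o3 o1) == 0 by rewrite cx1.
    witT (o1, o0) (S o0 o1) (S o1 o1) (S o0 o0) U O.
- by move=> /B11n[_ _ /and4P[n0 n1 n2 n3] _]; newT S U O.
- by rewrite negbK => /B11o[_ _ ? _].
- by move=> /B11n[_ _ _ /and4P[n0 n1 n2 n3]]; newT S U O.
- by rewrite negbK => /B11o[_ _ _ ?].
Qed.


Theorem mainTheorem17 (R : realType) (S : 'I_4 -> 'I_4 -> 'rV[R[i]]_4)
    (Rep : {set 'I_4 * 'I_4}) :
  sudoQ4 S -> phase_reps S Rep -> (#|Rep| \in [:: 4; 6; 8; 16])%N.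
Proof.
move=> hq hr.
have hS : SQ S := conj (sudoQ_unit hq) (sudoQ_orth hq).
rewrite (card_reps hr) (Fset_eq hS).
exact: card_newb (constraint hS).
Qed.
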